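(* Let $s\ge 1$, $q=4^{2s}$, and let $\theta$ be the automorphism of $F_q$ given by $\theta(a)=a^{4^s}$. Let $n$ be an even positive integer, let $g(x)\in F_q[x;\theta]$ be a right divisor of $x^n-1$ in $F_q[x;\theta]$ whose degree $m$ is odd, and let $C=\langle g(x)\rangle$ be the skew cyclic code of length $n$ over $F_q$ it generates. If $g(x)$ is a $\theta$-palindromic polynomial, then $C$ is a reversible DNA code. Conversely, if $C$ is a reversible DNA code, then $C$ is generated by a $\theta$-palindromic polynomial.
   Context: $F_q[x;\theta]$ is the skew polynomial ring: polynomials $\sum a_ix^i$ with $a_i\in F_q$, usual addition, and multiplication determined by $xa=\theta(a)x$ for $a\in F_q$. A skew cyclic code of length $n$ is a linear code $C\subseteq F_q^n$ such that $(\theta(c_{n-1}),\theta(c_0),\ldots,\theta(c_{n-2}))\in C$ whenever $(c_0,\ldots,c_{n-1})\in C$; identifying $(c_0,\ldots,c_{n-1})$ with $c_0+c_1x+\dots+c_{n-1}x^{n-1}$, such codes are the left $F_q[x;\theta]$-submodules of $F_q[x;\theta]/(x^n-1)$, and $\langle g(x)\rangle$ denotes the left submodule generated by $g(x)$ (the generator need not be monic). A polynomial $f(x)=a_0+a_1x+\dots+a_tx^t$ of degree $t$ is palindromic if $a_i=a_{t-i}$ for all $i$, and $\theta$-palindromic if $a_i=\theta(a_{t-i})$ for all $i$. DNA correspondence: there is a fixed bijection $\tau:F_{4^{2s}}\to\{A,T,G,C\}^{2s}$ such that for every $\beta$, $\tau(\beta^{4^s})$ is the reverse of the string $\tau(\beta)$;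 it extends to $\phi:F_q^n\to\{A,T,G,C\}^{2sn}$ by concatenation. A code $C\subseteq F_q^n$ is a reversible DNA code if the reverse string $\phi(c)^r$ lies in $\phi(C)$ for all $c\in C$; equivalently, $(\theta(c_{n-1}),\ldots,\theta(c_1),\theta(c_0))\in C$ for every $(c_0,\ldots,c_{n-1})\in C$. *)

(* Defs.v *)
From HB Require Import structures.
From mathcomp Require Import all_boot all_order all_algebra all_field.
Set Implicit Arguments. Unset Strict Implicit. Unset Printing Implicit Defensive.
Import GRing.Theory.
Local Open Scope ring_scope.

Definition theta (s : nat) (F : finFieldType) (a : F) : F := a ^+ (4 ^ s).

(* Skew polynomials over F are represented by their coefficient sequence,
   i.e. by elements of {poly F} (addition is the usual one); the skew
   multiplication is determined by x a = th(a) x: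
   (sum_i p_i x^i)(sum_j q_j x^j) = sum_k (sum_{i+j=k} p_i th^i(q_j)) x^k. *)
Definition skew_mul (F : fieldType) (th : F -> F) (p q : {poly F}) : {poly F} :=
  \poly_(k < size p + size q)
     \sum_(i < k.+1) p`_i * iter i th (q`_(k - i)).

Definition skew_right_divides (F : fieldType) (th : F -> F) (g f : {poly F}) : Prop :=
  exists h : {poly F}, f = skew_mul th h g.

Definition poly_of_vec (F : fieldType) (n : nat) (c : 'rV[F]_n) : {poly F} :=
  \sum_(i < n) (c ord0 i)%:P * 'X^i.

(* The left F[x;th]-submodule <g> of F[x;th]/(x^n - 1) generated by g,
   viewed as a subset of F^n.  Since the ideal (x^n - 1) is two-sided here
   (th has order dividing n when used), membership of c means that
   c(x) = f*g + h*(x^n - 1) for some skew polynomials f, h. *)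
Definition skew_code_gen (F : fieldType) (th : F -> F) (n : nat) (g : {poly F})
  (c : 'rV[F]_n) : Prop :=
  exists f h : {poly F},
    poly_of_vec c = skew_mul th f g + skew_mul th h ('X^n - 1).

Definition theta_palindromic (F : fieldType) (th : F -> F) (p : {poly F}) : Prop :=
  p != 0 /\ forall i : nat, (i <= (size p).-1)%N -> p`_i = th (p`_((size p).-1 - i)).

Inductive nucleotide := nA | nT | nG | nC.

Definition DNA_correspondence (s : nat) (F : finFieldType)
  (tau : F -> seq nucleotide) : Prop :=
  [/\ forall b, size (tau b) = (2 * s)%N,
      injective tau,
      forall w : seq nucleotide, size w = (2 * s)%N -> exists b, tau b = w
    & forall b, tau (b ^+ (4 ^ s)) = rev (tau b)].

Definition phi_DNA (F : finFieldType) (tau : F -> seq nucleotide) (n : nat)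
  (c : 'rV[F]_n) : seq nucleotide :=
  flatten [seq tau (c ord0 i) | i <- enum 'I_n].

Definition reversible_DNA (F : finFieldType) (tau : F -> seq nucleotide) (n : nat)
  (C : 'rV[F]_n -> Prop) : Prop :=
  forall c, C c -> exists c', C c' /\ phi_DNA tau c' = rev (phi_DNA tau c).
Arguments skew_code_gen {F} th n g c.

(* Main.v *)
Require Import Defs.
From HB Require Import structures.
From mathcomp Require Import all_boot all_order all_algebra all_field.
From mathcomp Require Import zify.
Import GRing.Theory.
Local Open Scope ring_scope.
Set Implicit Arguments. Unset Strict Implicit.

Lemma triangle (R : nmodType) (G : nat -> nat -> R) k :
  \sum_(i < k.+1) \sum_(a < i.+1) G a i =
  \sum_(a < k.+1) \sum_(b < (k - a).+1) G a (a + b)%N.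
Proof.
elim: k => [|k IH]; first by rewrite !big_ord1 addn0.
rewrite big_ord_recr /= IH [RHS]big_ord_recr /= subnn big_ord1 addn0.
rewrite [in RHS](eq_bigr (fun a : 'I_k.+1 => \sum_(b < (k - a).+1) G a (a + b)%N + G a k.+1)).
  rewrite big_split /= -addrA; congr (_ + _).
  by rewrite big_ord_recr.
move=> a _ /=; rewrite (subSn (leq_ord a)) big_ord_recr /=.
by congr (_ + G a _); have := ltn_ord a; lia.
Qed.
Ltac szlia :=
 repeat match goal with H : is_true _ |- _ => revert H end;
 repeat match goal with
 | |- context [@size _ (@polyseq _ ?p)] => let x := fresh "sz" in set x := size (polyseq p)
 | |- context [@nat_of_ord _ ?p] => let x := fresh "o" in set x := nat_of_ord p
 end; intros; lia.

Section Skew.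
Variables (F : fieldType) (th : F -> F).
Hypothesis thD : forall x y, th (x + y) = th x + th y.
Hypothesis thM : forall x y, th (x * y) = th x * th y.
Hypothesis th1 : th 1 = 1.
Implicit Types p q r : {poly F}.

Lemma th0 : th 0 = 0.
Proof. have h := thD 0 0; rewrite addr0 in h.
by apply: (addrI (th 0)); rewrite addr0 -h. Qed.
Lemma thN x : th (- x) = - th x.
Proof. by apply/eqP; rewrite -subr_eq0 opprK -thD addNr th0. Qed.

Lemma ithD i x y : iter i th (x + y) = iter i th x + iter i th y.
Proof. by elim: i => //= i ->; rewrite thD. Qed.
Lemma ithM i x y : iter i th (x * y) = iter i th x * iter i th y.
Proof. by elim: i => //= i ->; rewrite thM. Qed.
Lemma ith0 i : iter i th 0 = 0.
Proof. by elim: i => //= i ->; rewrite th0. Qed.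
Lemma ith1 i : iter i th 1 = 1.
Proof. by elim: i => //= i ->; rewrite th1. Qed.
Lemma ithN i x : iter i th (- x) = - iter i th x.
Proof. by elim: i => //= i ->; rewrite thN. Qed.
Lemma ith_sum i (I : finType) (G : I -> F) :
  iter i th (\sum_j G j) = \sum_j iter i th (G j).
Proof. exact: (big_morph _ (ithD i) (ith0 i)). Qed.

Local Notation sm := (skew_mul th).

Lemma coef_skew p q k :
  (sm p q)`_k = \sum_(i < k.+1) p`_i * iter i th (q`_(k - i)).
Proof.
rewrite coef_poly; case: ifP => // /negbT; rewrite -leqNgt => hk.
symmetry; apply: big1 => i _.
have [hi|hi] := ltnP i (size p).
  by rewrite (nth_default 0 (_ : size q <= k - i)%N) ?ith0 ?mulr0 //; lia.
by rewrite nth_default // mul0r.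
Qed.

Lemma skew_assoc p q r : sm p (sm q r) = sm (sm p q) r.
Proof.
apply/polyP => k; rewrite !coef_skew.
under [RHS]eq_bigr do rewrite coef_skew mulr_suml.
rewrite (@triangle _ (fun a i => p`_a * iter a th (q`_(i - a)) * iter i th (r`_(k - i)))) /=; apply: eq_bigr => a _.
rewrite coef_skew ith_sum mulr_sumr; apply: eq_bigr => b _.
rewrite ithM mulrA addKn subnDA -iterD addnC.
by congr (_ * _ * iter _ _ _); rewrite addnC.
Qed.

Lemma skewDl p q r : sm (p + q) r = sm p r + sm q r.
Proof.
apply/polyP => k; rewrite coefD !coef_skew -big_split; apply: eq_bigr => i _.
by rewrite coefD mulrDl.
Qed.

Lemma skewDr p q r : sm p (q + r) = sm p q + sm p r.
Proof.
apply/polyP => k; rewrite coefD !coef_skew -big_split; apply: eq_bigr => i _.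
by rewrite coefD ithD mulrDr.
Qed.

Lemma skew0l q : sm 0 q = 0.
Proof. by apply/polyP => k; rewrite coef_skew coef0 big1 // => i _; rewrite coef0 mul0r. Qed.

Lemma skew0r p : sm p 0 = 0.
Proof. by apply/polyP => k; rewrite coef_skew coef0 big1 // => i _; rewrite coef0 ith0 mulr0. Qed.

Lemma skewCl c q : sm c%:P q = c *: q.
Proof.
apply/polyP => k; rewrite coef_skew coefZ big_ord_recl /= coefC eqxx subn0.
by rewrite big1 ?addr0 // => i _; rewrite coefC /= mul0r.
Qed.

Lemma skew_centralL r p :
  (forall i, r`_i != 0 -> forall x, iter i th x = x) -> sm r p = r * p.
Proof.
move=> hr; apply/polyP => k; rewrite coef_skew coefM; apply: eq_bigr => i _.
by have [->|/hr ->] := eqVneq r`_i 0; rewrite ?mul0r.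
Qed.

Lemma skew_fixR p r :
  (forall i j, iter i th (r`_j) = r`_j) -> sm p r = p * r.
Proof.
move=> hr; apply/polyP => k; rewrite coef_skew coefM; apply: eq_bigr => i _.
by rewrite hr.
Qed.

Lemma skew_monoL a k q i :
  (sm (a *: 'X^k) q)`_i = if (k <= i)%N then a * iter k th (q`_(i - k)) else 0.
Proof.
rewrite coef_skew; case: ifP => hk.
  rewrite (bigD1 (Ordinal (_ : k < i.+1)%N)) //= big1 ?addr0.
    by rewrite coefZ coefXn eqxx mulr1.
  move=> j /eqP hj; rewrite coefZ coefXn; case: eqP => [hjk|_]; last by rewrite mulr0 mul0r.
  by case: hj; apply: val_inj.
apply: big1 => j _; rewrite coefZ coefXn; case: eqP => [hj|_]; last by rewrite mulr0 mul0r.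
by have := ltn_ord j; rewrite hj; lia.
Qed.

Hypothesis thinj : forall x, th x = 0 -> x = 0.

Lemma ith_eq0 i x : iter i th x = 0 -> x = 0.
Proof. by elim: i => //= i IH /thinj /IH. Qed.

Lemma skew_coef_top p q :
  (sm p q)`_((size p).-1 + (size q).-1) = lead_coef p * iter (size p).-1 th (lead_coef q).
Proof.
have hlt : ((size p).-1 < ((size p).-1 + (size q).-1).+1)%N by lia.
rewrite coef_skew (bigD1 (Ordinal hlt)) //= addKn big1 ?addr0 // => j /eqP hj.
have [hl|hl] := ltnP j (size p).-1.
  rewrite (nth_default 0 (_ : size q <= _)%N) ?ith0 ?mulr0 //. set sq := size q in hl *; set sp := size p in hl *; clear hj; lia.
rewrite [p`__]nth_default ?mul0r //.
have : (nat_of_ord j != (size p).-1) by apply/eqP => h; apply: hj; apply: val_inj.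
set sq := size q in hl *; set sp := size p in hl *; lia.
Qed.

Lemma size_skew p q : p != 0 -> q != 0 -> size (sm p q) = (size p + size q).-1.
Proof.
move=> p0 q0.
have sp : (0 < size p)%N by rewrite size_poly_gt0.
have sq : (0 < size q)%N by rewrite size_poly_gt0.
apply/eqP; rewrite eqn_leq; apply/andP; split.
  apply/leq_sizeP => j hj; rewrite coef_skew big1 // => i _.
  have [hi|hi] := ltnP i (size p).
    by rewrite [q`__]nth_default ?ith0 ?mulr0 //; szlia.
  by rewrite nth_default ?mul0r.
have : (sm p q)`_((size p).-1 + (size q).-1) != 0.
  rewrite skew_coef_top mulf_eq0 lead_coef_eq0 (negbTE p0) /=.
  by apply/eqP => /ith_eq0 /eqP; rewrite lead_coef_eq0 (negbTE q0).
move=> /eqP h; apply: contraT; rewrite -ltnNge => hlt; case: h.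
by apply: nth_default; szlia.
Qed.

End Skew.

Section Rev.
Variables (F : fieldType) (th : F -> F).
Hypothesis thD : forall x y, th (x + y) = th x + th y.
Hypothesis thM : forall x y, th (x * y) = th x * th y.
Hypothesis th1 : th 1 = 1.
Hypothesis thK : forall x, th (th x) = x.
Implicit Types p q r : {poly F}.
Local Notation sm := (skew_mul th).

Definition rho (N : nat) p : {poly F} := \poly_(j < N.+1) th (p`_(N - j)).

Lemma iter_par i x : iter i th x = if odd i then th x else x.
Proof. by elim: i => //= i ->; case: (odd i); rewrite ?thK. Qed.

Lemma rhoD N p q : rho N (p + q) = rho N p + rho N q.
Proof. apply/polyP => j; rewrite coefD !coef_poly; case: ifP => _; rewrite ?coefD ?thD ?addr0 //. Qed.

Lemma rho0 N : rho N 0 = 0.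
Proof. by apply/polyP => j; rewrite coef_poly !coef0 (th0 thD) if_same. Qed.

Lemma rho_sum N (I : finType) (G : I -> {poly F}) :
  rho N (\sum_i G i) = \sum_i rho N (G i).
Proof. exact: (big_morph _ (rhoD N) (rho0 N)). Qed.

Lemma skew_suml (I : finType) (G : I -> {poly F}) q :
  sm (\sum_i G i) q = \sum_i sm (G i) q.
Proof.
apply: (big_rec2 (fun a b => sm a q = b)); first exact: skew0l.
by move=> i a b _ <-; rewrite skewDl.
Qed.

Lemma rho_monomial M a k : (k <= M)%N -> rho M (a *: 'X^k) = th a *: 'X^(M - k).
Proof.
move=> hk; apply/polyP => j; rewrite coef_poly !coefZ !coefXn.
case: ifP => hj.
  have -> : ((M - j == k) = (j == M - k))%N by apply/eqP/eqP; lia.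
  by case: eqP => _; rewrite ?mulr1 ?mulr0 ?(th0 thD).
have -> : (j == M - k)%N = false by apply/eqP; lia.
by rewrite mulr0.
Qed.

End Rev.

Section Rev2.
Variables (F : fieldType) (th : F -> F).
Hypothesis thD : forall x y, th (x + y) = th x + th y.
Hypothesis thM : forall x y, th (x * y) = th x * th y.
Hypothesis th1 : th 1 = 1.
Hypothesis thK : forall x, th (th x) = x.
Implicit Types p q r : {poly F}.
Local Notation sm := (skew_mul th).

Lemma rho_mono N m (g : {poly F}) a k :
  size g = m.+1 -> (forall i, (i <= m)%N -> g`_i = th (g`_(m - i))) ->
  ~~ odd (N - m) -> (m <= N)%N -> (k <= N - m)%N ->
  rho th N (sm (a *: 'X^k) g) = sm (th a *: 'X^(N - m - k)) g.
Proof.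
move=> sg hpal hev hmN hk; apply/polyP => j.
have gz : forall i, (m < i)%N -> g`_i = 0 by move=> i hi; apply: nth_default; rewrite sg.
rewrite coef_poly !(skew_monoL thD).
have th0' := th0 thD.
case: (ltnP j N.+1) => hj; last first.
  case: leqP => ht //; rewrite gz ?(ith0 thD) ?mulr0 //; lia.
case: (leqP k (N - j)) => hkj; last first.
  case: leqP => ht; rewrite ?th0' // gz ?(ith0 thD) ?mulr0 //; lia.
case: (leqP (N - m - k) j) => ht; last first.
  by rewrite gz ?(ith0 thD) ?mulr0 ?th0' //; lia.
rewrite (hpal (j - (N - m - k))%N); last by lia.
have -> : (m - (j - (N - m - k)) = N - j - k)%N by lia.
rewrite thM -iterS -iterSr !(iter_par thK).
have e : odd (N - m - k) = odd k.
  move: hev; rewrite -(subnK hk) oddD addnK.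
  by case: (odd (N - m - k)); case: (odd k).
by rewrite /= e.
Qed.

Lemma rho_mul N m (g f : {poly F}) :
  size g = m.+1 -> (forall i, (i <= m)%N -> g`_i = th (g`_(m - i))) ->
  ~~ odd (N - m) -> (m <= N)%N -> (size f <= (N - m).+1)%N ->
  rho th N (sm f g) = sm (rho th (N - m) f) g.
Proof.
move=> sg hpal hev hmN hf.
have ef : f = \sum_(i < size f) f`_i *: 'X^i by rewrite -poly_def coefK.
rewrite {1 2}ef.
rewrite skew_suml // rho_sum // rho_sum // skew_suml //.
apply: eq_bigr => i _.
have hi := ltn_ord i.
rewrite (rho_mono (m:=m)) // ?rho_monomial //; try lia.
Qed.

End Rev2.

Lemma skewNl (F : fieldType) (th : F -> F) (thD : forall x y, th (x + y) = th x + th y)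
  (p q : {poly F}) : skew_mul th (- p) q = - skew_mul th p q.
Proof. by apply/eqP; rewrite -addr_eq0 -(skewDl thD) addNr skew0l. Qed.

Lemma rhoZ (F : fieldType) (th : F -> F) (thD : forall x y, th (x + y) = th x + th y)
  (thM : forall x y, th (x * y) = th x * th y) N a (p : {poly F}) :
  rho th N (a *: p) = th a *: rho th N p.
Proof.
apply/polyP => j; rewrite coefZ !coef_poly; case: ifP => _; first by rewrite coefZ thM.
by rewrite mulr0.
Qed.

Section Vec.
Variables (F : fieldType) (n : nat).

Lemma pov_coef (c : 'rV[F]_n) (i : 'I_n) : (poly_of_vec c)`_i = c ord0 i.
Proof.
rewrite /poly_of_vec coef_sum (bigD1 i) //= coefCM coefXn eqxx mulr1 big1 ?addr0 //.
move=> j hj; rewrite coefCM coefXn.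
by case: eqP => [/val_inj e|_]; [rewrite e eqxx in hj | rewrite mulr0].
Qed.

Lemma pov_size (c : 'rV[F]_n) : (size (poly_of_vec c) <= n)%N.
Proof.
apply/leq_sizeP => j hj; rewrite /poly_of_vec coef_sum big1 // => i _.
rewrite coefCM coefXn; case: eqP => [e|_]; last by rewrite mulr0.
by have := ltn_ord i; rewrite -e; lia.
Qed.

Lemma pov_inj (c d : 'rV[F]_n) : poly_of_vec c = poly_of_vec d -> c = d.
Proof.
move=> e; apply/matrixP => i j; rewrite (ord1 i) -!pov_coef; by rewrite e.
Qed.

Lemma pov_vec (p : {poly F}) : (size p <= n)%N -> poly_of_vec (\row_(i < n) p`_i) = p.
Proof.
move=> hp; apply/polyP => k.
have [hk|hk] := ltnP k n.
  by rewrite (pov_coef _ (Ordinal hk)) mxE.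
rewrite nth_default; last by apply: leq_trans (pov_size _) hk.
by rewrite nth_default //; apply: leq_trans hp hk.
Qed.

Definition rv (th : F -> F) (c : 'rV[F]_n) : 'rV[F]_n := \row_(i < n) th (c ord0 (rev_ord i)).

Lemma pov_rv (th : F -> F) (thD : forall x y, th (x + y) = th x + th y) (c : 'rV[F]_n) :
  (0 < n)%N -> poly_of_vec (rv th c) = rho th n.-1 (poly_of_vec c).
Proof.
move=> hn; apply/polyP => k; rewrite coef_poly.
have [hk|hk] := ltnP k n.
  rewrite (pov_coef _ (Ordinal hk)) mxE ifT; last by lia.
  by rewrite -(pov_coef c) /=; congr (th (_ `_ _)); lia.
rewrite ifF; last by lia.
by apply: nth_default; apply: leq_trans (pov_size _) hk.
Qed.

End Vec.

Lemma rev_enum n : rev (enum 'I_n) = map (@rev_ord n) (enum 'I_n).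
Proof.
apply: (inj_map val_inj); rewrite map_rev val_enum_ord -map_comp.
rewrite (map_comp (fun i => n - i.+1)%N val) val_enum_ord.
apply: (eq_from_nth (x0 := 0%N)); first by rewrite size_rev size_map.
move=> i; rewrite size_rev size_iota => hi.
rewrite nth_rev ?size_iota // (nth_map 0%N) ?size_iota // !nth_iota //; lia.
Qed.

Lemma flatten_inj (T X : Type) (f : T -> seq X) L (s1 s2 : seq T) :
  size s1 = size s2 -> (forall x, size (f x) = L) ->
  flatten (map f s1) = flatten (map f s2) -> map f s1 = map f s2.
Proof.
elim: s1 s2 => [|a s1 IH] [|b s2] //= [hs] hL.
move=> e.
have ha : f a = f b.
  by rewrite -(take_size_cat (flatten (map f s1)) (erefl (size (f a)))) e hL -(hL b) take_size_cat.
have hb : flatten (map f s1) = flatten (map f s2).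
  by rewrite -(drop_size_cat (flatten (map f s1)) (erefl (size (f a)))) e hL -(hL b) drop_size_cat.
by rewrite ha (IH s2).
Qed.

Lemma phi_rv s (F : finFieldType) (tau : F -> seq nucleotide) (htau : DNA_correspondence s tau)
  n (c : 'rV[F]_n) : phi_DNA tau (rv (theta s (F:=F)) c) = rev (phi_DNA tau c).
Proof.
case: htau => _ _ _ trev.
rewrite /phi_DNA rev_flatten -map_rev -map_rev rev_enum -!map_comp.
by congr flatten; apply: eq_map => i /=; rewrite mxE /theta trev.
Qed.

Lemma phi_inj s (F : finFieldType) (tau : F -> seq nucleotide) (htau : DNA_correspondence s tau)
  n (c d : 'rV[F]_n) : phi_DNA tau c = phi_DNA tau d -> c = d.
Proof.
case: htau => tsz tinj _ _.
rewrite /phi_DNA (map_comp tau (c ord0)) (map_comp tau (d ord0)) => e.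
have := flatten_inj (L := (2 * s)%N) _ tsz e; rewrite !size_map => /(_ erefl).
move=> /(inj_map tinj) /eq_in_map h.
by apply/matrixP => i j; rewrite (ord1 i) h // mem_enum.
Qed.

Section Theta.
Variables (s : nat) (F : finFieldType).
Hypothesis hF : #|F| = (4 ^ (2 * s))%N.
Local Notation th := (theta s (F:=F)).

Lemma char2 : (2 \in [pchar F])%N.
Proof.
have e : #|F| = (2 ^ (2 * (2 * s)))%N by rewrite hF (_ : 4 = 2 ^ 2)%N // -expnM.
exact: (card_finPcharP e).
Qed.

Lemma two0 : (2%:R : F) = 0.
Proof. exact: pcharf0 char2. Qed.

Lemma thD x y : th (x + y) = th x + th y.
Proof.
apply: exprDn_pchar; rewrite (_ : 4 = 2 ^ 2)%N // -expnM pnatX pnatE //.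
by rewrite char2.
Qed.

Lemma thM x y : th (x * y) = th x * th y.
Proof. exact: exprMn. Qed.

Lemma th1 : th 1 = 1.
Proof. exact: expr1n. Qed.

Lemma thK x : th (th x) = x.
Proof. by rewrite /theta -exprM -expnD addnn -mul2n -hF expf_card. Qed.

Lemma thinj x : th x = 0 -> x = 0.
Proof. by move/eqP; rewrite /theta expf_eq0 => /andP[_ /eqP]. Qed.

End Theta.

Unset Implicit Arguments.

Theorem theorem2 (s : nat) (F : finFieldType)
  (hs : (1 <= s)%N) (hF : #|F| = (4 ^ (2 * s))%N)
  (tau : F -> seq nucleotide) (htau : DNA_correspondence s tau)
  (n : nat) (hn : (0 < n)%N) (hneven : ~~ odd n)
  (g : {poly F})
  (hdiv : skew_right_divides (theta s (F:=F)) g ('X^n - 1))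
  (hm : odd (size g).-1) :
  (theta_palindromic (theta s (F:=F)) g ->
     reversible_DNA tau (skew_code_gen (theta s (F:=F)) n g)) /\
  (reversible_DNA tau (skew_code_gen (theta s (F:=F)) n g) ->
     exists g' : {poly F}, theta_palindromic (theta s (F:=F)) g' /\
       (forall c : 'rV[F]_n,
          skew_code_gen (theta s (F:=F)) n g c <-> skew_code_gen (theta s (F:=F)) n g' c)).
Proof.
have tD : forall x y, theta s (F:=F) (x + y) = theta s x + theta s y := thD hF.
have tM : forall x y, theta s (F:=F) (x * y) = theta s x * theta s y := @thM s F.
have t1 : theta s (F:=F) 1 = 1 := @th1 s F.
have tK : forall x, theta s (F:=F) (theta s x) = x := thK hF.
have tI : forall x, theta s (F:=F) x = 0 -> x = 0 := fun x => @thinj s F x.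
have t2 : (2%:R : F) = 0 := two0 hF.
case: hdiv => k hk.
have hXn : size ('X^n - 1 : {poly F}) = n.+1 by rewrite size_Xn_sub_1.
have g0 : g != 0 by apply/eqP => e; move: hXn; rewrite hk e (skew0r tD) size_poly0.
have k0 : k != 0 by apply/eqP => e; move: hXn; rewrite hk e (skew0l tD) size_poly0.
have hsz := size_skew tD tI k0 g0; rewrite -hk hXn in hsz.
have sgpos : (0 < size g)%N by rewrite size_poly_gt0.
have skpos : (0 < size k)%N by rewrite size_poly_gt0.
set m := (size g).-1 in hm.
have szg : size g = m.+1 by rewrite /m prednK.
have hmn : (m < n)%N.
  have : m != n by apply/eqP => e; rewrite e in hm; rewrite hm in hneven.
  move: hsz; rewrite szg; lia.
have ev1 : ~~ odd (n.-1 - m).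
  have -> : (n.-1 - m = n - m.+1)%N by lia.
  by rewrite oddB // /= hm (negbTE hneven).
have g00 : g`_0 != 0.
  apply/eqP => e0; have := congr1 (fun p : {poly F} => p`_0) hk.
  rewrite (coef_skew tD) big_ord1 /= e0 mulr0 coefB coefXn coef1 /=.
  rewrite (_ : (0 == n)%N = false); last by apply/eqP; lia.
  by rewrite sub0r => /eqP; rewrite oppr_eq0 oner_eq0.
have memC : forall c, skew_code_gen (theta s (F:=F)) n g c ->
    exists f, poly_of_vec c = skew_mul (theta s (F:=F)) f g /\ (size f <= n - m)%N.
  move=> c [f [h e]].
  have e' : poly_of_vec c = skew_mul (theta s (F:=F)) (f + skew_mul (theta s (F:=F)) h k) g.
    by rewrite e hk (skew_assoc tD tM) (skewDl tD).
  exists (f + skew_mul (theta s (F:=F)) h k); split => //.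
  have := pov_size c; rewrite e'.
  case: (eqVneq (f + skew_mul (theta s (F:=F)) h k) 0) => [->|nz]; first by rewrite size_poly0.
  rewrite (size_skew tD tI nz g0) szg; szlia.
have memC' : forall c f, poly_of_vec c = skew_mul (theta s (F:=F)) f g ->
    skew_code_gen (theta s (F:=F)) n g c.
  by move=> c f e; exists f, 0; rewrite (skew0l tD) addr0.
split.
  move=> [_ hpal] c hc; exists (rv (theta s (F:=F)) c); split; last exact: (phi_rv htau).
  have [f [ef sf]] := memC c hc.
  apply: (memC' _ (rho (theta s (F:=F)) (n.-1 - m) f)).
  rewrite (pov_rv tD _ hn) ef (rho_mul tD tM tK szg) //; szlia.
move=> hrev.
have hgn : (size g <= n)%N by rewrite szg.
pose cg := \row_(i < n) g`_i.
have ecg : poly_of_vec cg = g := pov_vec hgn.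
have Ccg : skew_code_gen (theta s (F:=F)) n g cg.
  by apply: (memC' _ 1); rewrite ecg -polyC1 (skewCl tD) scale1r.
have [c' [Cc' ec']] := hrev cg Ccg.
have ec'2 : c' = rv (theta s (F:=F)) cg by apply: (phi_inj htau); rewrite ec' phi_rv.
have [F0 [eF _]] := memC c' Cc'.
rewrite ec'2 (pov_rv tD _ hn) ecg in eF.
pose gs := rho (theta s (F:=F)) m g.
have egs : rho (theta s (F:=F)) n.-1 g = 'X^(n.-1 - m) * gs.
  apply/polyP => j; rewrite coefXnM !coef_poly.
  case: (ltnP j (n.-1 - m)) => hj.
    rewrite ifT; last by lia.
    by rewrite nth_default ?(th0 tD) // szg; lia.
  have -> : (j - (n.-1 - m) < m.+1)%N = (j < n.-1.+1)%N by apply/idP/idP; lia.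
  by case: ifP => // _; congr (theta s g`_ _); lia.
have two_sided : 'X^n * gs = gs + skew_mul (theta s (F:=F)) gs ('X^n - 1).
  rewrite (skew_fixR tD); first by rewrite mulrBr mulr1 mulrC addrC subrK.
  move=> i j; rewrite coefB coefXn coef1 (ithD tD) (ithN tD).
  by case: (_ == n)%N; case: (_ == 0)%N; rewrite /= ?(ith0 tD) ?(ith1 t1).
have hxm : skew_mul (theta s (F:=F)) 'X^(m.+1) (rho (theta s (F:=F)) n.-1 g) = 'X^n * gs.
  rewrite (skew_centralL tD); last first.
    move=> i; rewrite coefXn; have [-> _ x|ne] := eqVneq i m.+1; last by rewrite /= mulr0n eqxx.
    by rewrite (iter_par tK) /= hm.
  rewrite egs mulrA -exprD; congr (_ ^+ _ * _); lia.
have eG : gs = skew_mul (theta s (F:=F))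
    (skew_mul (theta s (F:=F)) 'X^(m.+1) F0 - skew_mul (theta s (F:=F)) gs k) g.
  by rewrite (skewDl tD) (skewNl tD) -!(skew_assoc tD tM) -hk -eF hxm two_sided addrK.
set G := (_ - _) in eG.
have gs0 : gs != 0.
  apply/eqP => e; have := congr1 (fun p : {poly F} => p`_m) e.
  rewrite coef_poly ltnSn subnn coef0 => /tI /eqP; by rewrite (negbTE g00).
have G0 : G != 0 by apply/eqP => e; move: gs0; rewrite eG e (skew0l tD) eqxx.
have sG : size G = 1%N.
  have := size_skew tD tI G0 g0; rewrite -eG => e.
  have : (size gs <= m.+1)%N := size_poly _ _.
  have : (0 < size G)%N by rewrite size_poly_gt0.
  move: e; rewrite szg; szlia.
set lam := G`_0.
have elam : gs = lam *: g by rewrite eG {1}(size1_polyC (eq_leq sG)) (skewCl tD).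
have hgs : forall i, (i <= m)%N -> gs`_i = theta s (g`_(m - i)).
  by move=> i hi; rewrite coef_poly ltnS hi.
have rr : rho (theta s (F:=F)) m gs = g.
  apply/polyP => j; rewrite coef_poly; case: ifP => hj.
    by rewrite hgs ?tK; [congr (g`_ _); lia | lia].
  by rewrite nth_default // szg; lia.
have lam1 : theta s lam * lam = 1.
  have : g = (theta s lam * lam) *: g.
    by rewrite -{1}rr elam (rhoZ tD tM) -/gs elam scalerA.
  move/eqP; rewrite -subr_eq0 -{1}(scale1r g).
  rewrite -scalerBl scaler_eq0 (negbTE g0) orbF subr_eq0 => /eqP e.
  by rewrite -e.
pose mu := if lam == 1 then 1 else 1 + lam.
have mu0 : mu != 0.
  rewrite /mu; have [hl|hl] := eqVneq lam 1; first by rewrite oner_eq0.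
  apply/eqP => e; move/eqP: hl; apply.
  have h11 : (1 + 1 : F) = 0 by rewrite -t2 mulr2n.
  move/eqP: e; rewrite addrC addr_eq0 => /eqP ->.
  by apply/eqP; rewrite eq_sym -addr_eq0 h11.
have hmu : theta s mu * lam = mu.
  rewrite /mu; have [hl|hl] := eqVneq lam 1; first by rewrite hl t1 mulr1.
  by rewrite tD t1 mulrDl lam1 mul1r addrC.
exists (mu *: g); split.
  split; first by rewrite scaler_eq0 negb_or mu0 g0.
  rewrite size_scale // szg /= => i hi.
  by rewrite !coefZ tM -hgs // elam coefZ mulrA hmu.
move=> c; split.
  move=> [f [h e]]; exists (skew_mul (theta s (F:=F)) f (mu^-1)%:P), h; rewrite e; congr (_ + _).
  by rewrite -(skew_assoc tD tM) (skewCl tD) scalerA mulVf // scale1r.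
move=> [f [h e]]; exists (skew_mul (theta s (F:=F)) f mu%:P), h; rewrite e; congr (_ + _).
by rewrite -(skew_assoc tD tM) (skewCl tD).
Qed.
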